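(* Let $\gamma>1$, $j\in\{0,1,2\}$, $J(x)=\int_1^x r^{-j/2}\,dr$, and let $v:\mathbb R\to\mathbb R$ be $C^1$. Suppose $s$ and $\tau_-$ are $C^1$ functions on $[1,\infty)$ with $\tau_-(1)=0$, satisfying for all $x\ge1$ $$s'(x)=1-\frac{\gamma+1}{4}v(\tau_-(x))\,x^{-j/2},\qquad s(x)-\tau_-(x)=x-1-\frac{\gamma+1}{2}v(\tau_-(x))J(x).$$ Then for all $x\ge1$ $$\frac{\gamma+1}{4}v(\tau_-(x))^2J(x)=\int_0^{\tau_-(x)}v(s)\,ds.$$ Consequently, if $v(\tau_-(x))>0$ for large $x$ and $\int_0^{\tau_-(x)}v(s)\,ds\to b>0$ as $x\to\infty$, then the velocity jump $[u]=x^{-j/2}v(\tau_-(x))$ satisfies $$[u]\sim\Big(\frac{4b}{(\gamma+1)J(x)}\Big)^{1/2}x^{-j/2}\sim\Big(\frac{4b}{\gamma+1}\Big)^{1/2}\begin{cases}x^{-1/2},&j=0,\\ \tfrac{1}{\sqrt2}x^{-3/4},&j=1,\\ x^{-1}(\log x)^{-1/2},&j=2.\end{cases}$$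
   Context: Setting: leading-order modulated simple wave $u=v(\tau)x^{-j/2}$ on forward characteristics $t-\tau=x-1-\frac{\gamma+1}{2}v(\tau)J(x)$ (wavelets labelled by $\tau$, the time at which they leave $x=1$), with $v$ the boundary data $u(1,\tau)$. A weak shock $t=s(x)$ moves into gas at rest; $\tau_-(x)$ is the label of the wavelet immediately behind the shock at position $x$, and the first relation is the weak-shock speed law $1/U\approx1-\frac{\gamma+1}{4}[u]$. *)

(* Defs.v *)
From Stdlib Require Import Reals Lra.
Open Scope R_scope.

Definition is_RInt (f : R -> R) (a b I : R) : Prop :=
  exists pr : Riemann_integrable f a b, RiemannInt pr = I.

Definition half_line (y : R) : Prop := 1 <= y.

Definition C1_R (f : R -> R) : Prop :=
  exists df : R -> R, (forall t, derivable_pt_lim f t (df t)) /\ continuity df.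

(* f is C^1 on the closed half-line [1,+oo): continuous on [1,oo) (within),
   differentiable on (1,oo), with derivative extending continuously to [1,oo). *)
Definition C1_half (f : R -> R) : Prop :=
  exists df : R -> R,
    (forall x, 1 < x -> derivable_pt_lim f x (df x)) /\
    (forall x, 1 <= x -> continue_in f half_line x) /\
    (forall x, 1 <= x -> continue_in df half_line x).

Definition xpow (j : nat) (x : R) : R := Rpower x (- INR j / 2).

Definition asymp (f g : R -> R) : Prop :=
  forall eps, 0 < eps -> exists M, forall x, M <= x -> Rabs (f x / g x - 1) < eps.

(* the explicit model asymptotics (without the constant (4b/(gamma+1))^{1/2}) *)
Definition model_rate (j : nat) (x : R) : R :=
  match j with
  | 0%nat => Rpower x (-1/2)
  | 1%nat => / sqrt 2 * Rpower x (-3/4)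
  | _ => / x * / sqrt (ln x)
  end.

(* Main.v *)
Require Import Defs.
From Stdlib Require Import Reals Lra Lia.
From Coquelicot Require Import Coquelicot.
Open Scope R_scope.

Lemma D_mult (f g : R -> R) x a b : is_derive f x a -> is_derive g x b ->
  is_derive (fun y => f y * g y) x (a * g x + f x * b).
Proof. intros Ha Hb. apply is_derive_Reals. apply is_derive_Reals in Ha, Hb.
  apply (derivable_pt_lim_mult f g x a b Ha Hb). Qed.

Lemma D_minus (f g : R -> R) x a b : is_derive f x a -> is_derive g x b ->
  is_derive (fun y => f y - g y) x (a - b).
Proof. intros Ha Hb. apply is_derive_Reals. apply is_derive_Reals in Ha, Hb.
  apply (derivable_pt_lim_minus f g x a b Ha Hb). Qed.

Lemma D_comp (f g : R -> R) x a b : is_derive g (f x) a -> is_derive f x b ->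
  is_derive (fun y => g (f y)) x (b * a).
Proof. intros Ha Hb. apply is_derive_Reals. apply is_derive_Reals in Ha, Hb.
  replace (b*a) with (a*b) by ring.
  apply (derivable_pt_lim_comp f g x b a Hb Ha). Qed.

Lemma D_const (c x : R) : is_derive (fun _ => c) x 0.
Proof. apply is_derive_Reals. apply derivable_pt_lim_const. Qed.

Lemma D_id (x : R) : is_derive (fun y => y) x 1.
Proof. apply is_derive_Reals. apply derivable_pt_lim_id. Qed.

Lemma lim_cont (f : R -> R) D x0 : continuity_pt f x0 -> limit1_in f D (f x0) x0.
Proof. intros H eps He. destruct (H eps He) as [a [Ha Hb]]. exists a; split; auto.
  intros y [Dy Dd]. destruct (Req_dec x0 y) as [->|Hn].
  - simpl. unfold R_dist. rewrite Rminus_diag, Rabs_R0. lra.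
  - apply Hb. split; [split; [exact I| exact Hn]|exact Dd]. Qed.

Lemma lim_comp (f g : R -> R) D x0 : limit1_in f D (f x0) x0 -> continuity_pt g (f x0) ->
  limit1_in (fun y => g (f y)) D (g (f x0)) x0.
Proof. intros Hf Hg eps He. destruct (Hg eps He) as [a [Ha Hb]].
  destruct (Hf a Ha) as [c [Hc Hd]]. exists c; split; auto.
  intros y [Dy Dd]. specialize (Hd y (conj Dy Dd)).
  destruct (Req_dec (f x0) (f y)) as [E|Hn].
  - simpl. unfold R_dist. rewrite E, Rminus_diag, Rabs_R0. lra.
  - apply Hb. split; [split; [exact I| exact Hn]|exact Hd]. Qed.

Lemma sq_close (r eps : R) : 0 < r -> Rabs (r*r - 1) < eps -> Rabs (r - 1) < eps.
Proof. intros Hr H. replace (r*r-1) with ((r-1)*(r+1)) in H by ring.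
  rewrite Rabs_mult in H. rewrite (Rabs_right (r+1)) in H by lra.
  assert (0 <= Rabs (r-1)) by apply Rabs_pos. nra. Qed.

Lemma xpow_der j y : 0 < y -> is_derive (xpow j) y ((- INR j / 2) * Rpower y (- INR j / 2 - 1)).
Proof. intros Hy. apply is_derive_Reals. unfold xpow. apply derivable_pt_lim_power; auto. Qed.

Lemma xpow_cont j y : 0 < y -> continuous (xpow j) y.
Proof. intros Hy. apply (ex_derive_continuous (K:=R_AbsRing) (V:=R_NormedModule) (xpow j)). eexists. apply xpow_der; auto. Qed.

Lemma xpow_pos j y : 0 < xpow j y.
Proof. unfold xpow, Rpower. apply exp_pos. Qed.

Definition Jt j (y : R) : R := RInt (xpow j) 1 y.

Lemma Jt_der j y : 0 < y -> is_derive (Jt j) y (xpow j y).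
Proof. intros Hy. apply (is_derive_RInt (xpow j) (Jt j) 1).
  - exists (mkposreal (y/2) ltac:(lra)). intros z Hz.
    change (Rabs (z - y) < y/2) in Hz. apply Rabs_lt_between' in Hz.
    unfold Jt; apply (RInt_correct (V:=R_CompleteNormedModule)). apply (ex_RInt_continuous (V:=R_CompleteNormedModule)). intros w Hw.
    apply xpow_cont. destruct Hw as [Hw _]. unfold Rmin in Hw. destruct (Rle_dec 1 z); lra.
  - apply xpow_cont; auto. Qed.

Lemma der_cont f x l : is_derive f x l -> continuity_pt f x.
Proof. intros H. apply continuity_pt_filterlim.
  apply (ex_derive_continuous (K:=R_AbsRing) (V:=R_NormedModule) f). exists l; auto. Qed.

Lemma V_der v : C1_R v -> forall y, is_derive (RInt v 0) y (v y).
Proof. intros [dv [Hdv _]] y.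
  assert (Hc : forall t, continuous v t).
  { intros t. apply continuity_pt_filterlim. apply der_cont with (dv t). apply is_derive_Reals; auto. }
  apply (is_derive_RInt v (RInt v 0) 0).
  - exists (mkposreal 1 ltac:(lra)). intros z Hz.
    apply (RInt_correct (V:=R_CompleteNormedModule)). apply (ex_RInt_continuous (V:=R_CompleteNormedModule)). intros; auto.
  - auto. Qed.

Lemma part1 (gamma : R) (j : nat) (J v s tau : R -> R)
  (HJ : forall x, 1 <= x -> Defs.is_RInt (fun r => xpow j r) 1 x (J x))
  (Hv : C1_R v) (Htau : C1_half tau)
  (Htau1 : tau 1 = 0)
  (Hshock : forall x, 1 < x ->
     derivable_pt_lim s x (1 - (gamma + 1) / 4 * v (tau x) * xpow j x))
  (Hchar : forall x, 1 <= x ->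
     s x - tau x = x - 1 - (gamma + 1) / 2 * v (tau x) * J x) :
  forall x, 1 <= x -> (gamma+1)/4 * v (tau x) * v (tau x) * J x - RInt v 0 (tau x) = 0.
Proof.
  assert (HVd := V_der v Hv).
  destruct Hv as [dv [Hdv _]]. destruct Htau as [dt [Hdt [Htc _]]].
  assert (HJJ : forall x, 1 <= x -> J x = Jt j x).
  { intros x Hx. destruct (HJ x Hx) as [pr E]. unfold Jt. rewrite <- E. symmetry. apply (RInt_Reals _ _ _ pr). }
  set (G1 := fun t => (gamma+1)/4 * v t * v t).
  set (F := fun y => G1 (tau y) * Jt j y - RInt v 0 (tau y)).
  assert (Hvd : forall t, is_derive v t (dv t)) by (intros; apply is_derive_Reals; auto).
  assert (HG1 : forall t, is_derive G1 t ((0 * v t + (gamma+1)/4 * dv t) * v t + (gamma+1)/4 * v t * dv t)).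
  { intros t. exact (D_mult _ _ _ _ _ (D_mult _ _ _ _ _ (D_const ((gamma+1)/4) t) (Hvd t)) (Hvd t)). }
  assert (HFd : forall x, 1 < x -> is_derive F x 0).
  { intros x Hx.
    assert (Ht : is_derive tau x (dt x)) by (apply is_derive_Reals; auto).
    assert (HF := D_minus _ _ _ _ _ (D_mult _ _ _ _ _ (D_comp _ _ _ _ _ (HG1 (tau x)) Ht) (Jt_der j x ltac:(lra)))
                    (D_comp _ _ _ _ _ (HVd (tau x)) Ht)).
    assert (Hs' : is_derive s x (1 - (gamma + 1) / 4 * v (tau x) * xpow j x)) by (apply is_derive_Reals; auto).
    assert (HL := D_minus _ _ _ _ _ Hs' Ht).
    assert (HR := D_minus _ _ _ _ _ (D_minus _ _ _ _ _ (D_id x) (D_const 1 x))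
       (D_mult _ _ _ _ _ (D_mult _ _ _ _ _ (D_const ((gamma+1)/2) x) (D_comp _ _ _ _ _ (Hvd (tau x)) Ht)) (Jt_der j x ltac:(lra)))).
    assert (HL2 : is_derive (fun y => y - 1 - (gamma+1)/2 * v (tau y) * Jt j y) x
                (1 - (gamma + 1) / 4 * v (tau x) * xpow j x - dt x)).
    { eapply is_derive_ext_loc; [|exact HL].
      exists (mkposreal ((x-1)/2) ltac:(lra)). intros z Hz.
      change (Rabs (z - x) < (x-1)/2) in Hz. apply Rabs_lt_between' in Hz.
      rewrite Hchar by lra. rewrite HJJ by lra. reflexivity. }
    pose proof (is_derive_unique _ _ _ HL2) as E1.
    pose proof (is_derive_unique _ _ _ HR) as E2.
    cbv beta in E1, E2. rewrite E1 in E2. clear E1.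
    cbv beta in HF.
    match type of HF with is_derive _ _ ?l => replace 0 with l; [exact HF|] end.
    match type of E2 with ?L1 = ?R1 => transitivity (- (v (tau x)) * (R1 - L1)) end.
    - unfold G1. field.
    - rewrite E2. ring. }
  assert (HF1 : F 1 = 0).
  { unfold F, Jt. rewrite Htau1, !RInt_point. unfold zero; simpl. ring. }
  assert (Hlim : limit1_in F (D_x half_line 1) (F 1) 1).
  { unfold F. apply limit_minus. apply limit_mul.
    - apply lim_comp. apply Htc; lra. eapply der_cont. apply HG1.
    - apply lim_cont. eapply der_cont. apply Jt_der; lra.
    - apply lim_comp. apply Htc; lra. eapply der_cont. apply HVd. }
  assert (Hconst : forall x y, 1 < y -> y < x -> F x = F y).
  { intros x y Hy Hxy. destruct (MVT_gen F y x (fun _ => 0)) as [c [_ Hc]].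
    - rewrite Rmin_left, Rmax_right by lra. intros z Hz. apply HFd. lra.
    - rewrite Rmin_left, Rmax_right by lra. intros z Hz. eapply der_cont. apply HFd. lra.
    - lra. }
  assert (HF0 : forall x, 1 <= x -> F x = 0).
  { intros x Hx. destruct (Req_dec x 1) as [->|Hn]; auto.
    destruct (Req_dec (F x) 0) as [E|Hne]; auto. exfalso.
    assert (Hp : 0 < Rabs (F x)) by (apply Rabs_pos_lt; auto).
    destruct (Hlim _ Hp) as [a [Ha Hb]].
    set (y := 1 + Rmin a (x-1) / 2).
    assert (Hm1 : Rmin a (x-1) <= a) by apply Rmin_l.
    assert (Hm2 : Rmin a (x-1) <= x-1) by apply Rmin_r.
    assert (Hm3 : 0 < Rmin a (x-1)) by (apply Rmin_glb_lt; lra).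
    assert (Hyy : F x = F y) by (apply Hconst; unfold y; lra).
    specialize (Hb y). simpl in Hb. unfold R_dist in Hb. rewrite HF1, Rminus_0_r, <- Hyy in Hb.
    assert (Rabs (F x) < Rabs (F x)); [|lra]. apply Hb. split.
    - split; unfold half_line, y; lra.
    - rewrite Rabs_right; unfold y; lra. }
  intros x Hx. rewrite HJJ by lra. specialize (HF0 x Hx). unfold F, G1 in HF0. exact HF0.
Qed.

Lemma xpow0 y : 0 < y -> xpow 0 y = 1.
Proof. intros. unfold xpow. replace (- INR 0 / 2) with 0 by (simpl; field). apply Rpower_O; auto. Qed.
Lemma xpow1 y : 0 < y -> xpow 1 y = / sqrt y.
Proof. intros. unfold xpow. replace (- INR 1 / 2) with (- / 2) by (simpl; field).
  rewrite Rpower_Ropp, Rpower_sqrt; auto. Qed.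
Lemma xpow2 y : 0 < y -> xpow 2 y = / y.
Proof. intros. unfold xpow. replace (- INR 2 / 2) with (Ropp 1) by (simpl; field).
  rewrite Rpower_Ropp, Rpower_1; auto. Qed.

Lemma Jt0 x : 1 <= x -> Jt 0 x = x - 1.
Proof. intros Hx. unfold Jt. apply (is_RInt_unique (V:=R_CompleteNormedModule)).
  replace (x - 1) with (minus ((fun y => y) x) ((fun y => y) 1)) by reflexivity.
  apply (is_RInt_derive (V:=R_CompleteNormedModule) (fun y => y) (xpow 0)).
  - intros z Hz. rewrite Rmin_left, Rmax_right in Hz by lra. rewrite xpow0 by lra. apply D_id.
  - intros z Hz. rewrite Rmin_left, Rmax_right in Hz by lra. apply xpow_cont; lra. Qed.

Lemma Jt1 x : 1 <= x -> Jt 1 x = 2 * sqrt x - 2.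
Proof. intros Hx. unfold Jt. apply (is_RInt_unique (V:=R_CompleteNormedModule)).
  replace (2 * sqrt x - 2) with (minus ((fun y => 2 * sqrt y) x) ((fun y => 2 * sqrt y) 1))
    by (rewrite sqrt_1; unfold minus, plus, opp; simpl; ring).
  apply (is_RInt_derive (V:=R_CompleteNormedModule) (fun y => 2 * sqrt y) (xpow 1)).
  - intros z Hz. rewrite Rmin_left, Rmax_right in Hz by lra. rewrite xpow1 by lra.
    assert (Hs := sqrt_lt_R0 z ltac:(lra)).
    replace (/ sqrt z) with (0 * sqrt z + 2 * / (2 * sqrt z)) by (field; lra).
    apply (D_mult (fun _ => 2) sqrt). apply D_const. apply is_derive_Reals. apply derivable_pt_lim_sqrt; lra.
  - intros z Hz. rewrite Rmin_left, Rmax_right in Hz by lra. apply xpow_cont; lra. Qed.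

Lemma Jt2 x : 1 <= x -> Jt 2 x = ln x.
Proof. intros Hx. unfold Jt. apply (is_RInt_unique (V:=R_CompleteNormedModule)).
  replace (ln x) with (minus (ln x) (ln 1))
    by (rewrite ln_1; unfold minus, plus, opp; simpl; ring).
  apply (is_RInt_derive (V:=R_CompleteNormedModule) ln (xpow 2)).
  - intros z Hz. rewrite Rmin_left, Rmax_right in Hz by lra. rewrite xpow2 by lra.
    apply is_derive_Reals. apply derivable_pt_lim_ln; lra.
  - intros z Hz. rewrite Rmin_left, Rmax_right in Hz by lra. apply xpow_cont; lra. Qed.

Lemma ratio_sq a q c : 0 < q -> c <> 0 -> (c*a/(sqrt q * c))*(c*a/(sqrt q*c)) = a*a/q.
Proof. intros Hq Hc. assert (Hs := sqrt_lt_R0 q Hq).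
  replace ((c*a/(sqrt q * c))*(c*a/(sqrt q*c))) with (a*a/(sqrt q * sqrt q)) by (field; lra).
  rewrite sqrt_sqrt; lra. Qed.

Lemma ratio2_sq A J p m : 0 < A -> 0 < J -> m <> 0 ->
  (sqrt (A / J) * p / (sqrt A * m)) * (sqrt (A / J) * p / (sqrt A * m)) = p * p / (J * m * m).
Proof. intros HA HJ Hm. assert (Hs := sqrt_lt_R0 A HA). assert (HAJ : 0 < A / J) by (apply Rdiv_lt_0_compat; lra).
  assert (Hs2 := sqrt_lt_R0 _ HAJ).
  replace ((sqrt (A / J) * p / (sqrt A * m)) * (sqrt (A / J) * p / (sqrt A * m))) with
    ((sqrt (A / J) * sqrt (A/J)) * p * p / ((sqrt A * sqrt A) * m * m)) by (field; lra).
  rewrite !sqrt_sqrt by lra. field; lra. Qed.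

Lemma finish A J p m eps : 0 < A -> 0 < J -> 0 < p -> 0 < m ->
  Rabs (p * p / (J * m * m) - 1) < eps -> Rabs (sqrt (A / J) * p / (sqrt A * m) - 1) < eps.
Proof. intros HA HJ Hp Hm H. apply sq_close.
  - assert (0 < sqrt (A/J)) by (apply sqrt_lt_R0; apply Rdiv_lt_0_compat; lra).
    assert (0 < sqrt A) by (apply sqrt_lt_R0; lra).
    apply Rdiv_lt_0_compat; apply Rmult_lt_0_compat; lra.
  - rewrite ratio2_sq; lra. Qed.

Lemma inv_small y eps : 0 < eps -> 1 + / eps <= y -> Rabs (/ y) < eps.
Proof. intros He Hy. assert (Hi : 0 < / eps) by (apply Rinv_0_lt_compat; lra).
  assert (0 < / y) by (apply Rinv_0_lt_compat; lra).
  rewrite Rabs_right by lra. apply (Rmult_lt_reg_r y); [lra|]. rewrite Rinv_l by lra.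
  assert (eps * / eps = 1) by (field; lra). nra. Qed.

Import Defs.
Theorem mainTheorem5
  (gamma : R) (j : nat) (J v s tau : R -> R)
  (Hgamma : 1 < gamma) (Hj : (j <= 2)%nat)
  (HJ : forall x, 1 <= x -> is_RInt (fun r => xpow j r) 1 x (J x))
  (Hv : C1_R v) (Hs : C1_half s) (Htau : C1_half tau)
  (Htau1 : tau 1 = 0)
  (Hshock : forall x, 1 < x ->
     derivable_pt_lim s x (1 - (gamma + 1) / 4 * v (tau x) * xpow j x))
  (Hchar : forall x, 1 <= x ->
     s x - tau x = x - 1 - (gamma + 1) / 2 * v (tau x) * J x) :
  (forall x, 1 <= x ->
     is_RInt v 0 (tau x) ((gamma + 1) / 4 * (v (tau x))^2 * J x))
  /\
  (forall b : R, 0 < b ->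
     (exists M, forall x, M <= x -> 0 < v (tau x)) ->
     (forall eps, 0 < eps -> exists M, forall x, M <= x ->
        forall I, is_RInt v 0 (tau x) I -> Rabs (I - b) < eps) ->
     asymp (fun x => xpow j x * v (tau x))
           (fun x => sqrt (4 * b / ((gamma + 1) * J x)) * xpow j x)
     /\
     asymp (fun x => sqrt (4 * b / ((gamma + 1) * J x)) * xpow j x)
           (fun x => sqrt (4 * b / (gamma + 1)) * model_rate j x)).
Proof.
  assert (HJJ : forall x, 1 <= x -> J x = Jt j x).
  { intros x Hx. destruct (HJ x Hx) as [pr E]. unfold Jt. rewrite <- E. symmetry. apply (RInt_Reals _ _ _ pr). }
  assert (P1 : forall x, 1 <= x -> is_RInt v 0 (tau x) ((gamma + 1) / 4 * (v (tau x))^2 * J x)).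
  { intros x Hx. pose proof (part1 gamma j J v s tau HJ Hv Htau Htau1 Hshock Hchar x Hx) as P.
    assert (Hvc : forall t, continuous v t).
    { destruct Hv as [dv [Hdv _]]. intros t. apply continuity_pt_filterlim.
      apply der_cont with (dv t). apply is_derive_Reals; auto. }
    assert (pr : Riemann_integrable v 0 (tau x)) by
      (apply ex_RInt_Reals_0; apply (ex_RInt_continuous (V:=R_CompleteNormedModule)); auto).
    exists pr. rewrite <- (RInt_Reals _ _ _ pr).
    assert (E : RInt v 0 (tau x) = (gamma + 1) / 4 * v (tau x) * v (tau x) * J x) by lra.
    rewrite E. ring. }
  assert (Jpos : forall x, 1 < x -> 0 < J x).
  { intros x Hx. rewrite HJJ by lra. destruct j as [|[|[|j']]].
    - rewrite Jt0 by lra. lra.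
    - rewrite Jt1 by lra. assert (sqrt 1 < sqrt x) by (apply sqrt_lt_1; lra). rewrite sqrt_1 in H. lra.
    - rewrite Jt2 by lra. assert (ln 1 < ln x) by (apply ln_increasing; lra). rewrite ln_1 in H. lra.
    - lia. }
  split; [exact P1|]. intros b Hb [M1 HM1] Hlim. split.
  - intros eps He. destruct (Hlim (eps*b) ltac:(nra)) as [M2 HM2].
    exists (Rmax (Rmax M1 M2) 2). intros x Hx.
    assert (x1 : M1 <= x) by (eapply Rle_trans; [|exact Hx]; eapply Rle_trans; [apply Rmax_l|apply Rmax_l]).
    assert (x2 : M2 <= x) by (eapply Rle_trans; [|exact Hx]; eapply Rle_trans; [apply Rmax_r|apply Rmax_l]).
    assert (x3 : 2 <= x) by (eapply Rle_trans; [|exact Hx]; apply Rmax_r).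
    assert (Hw := HM1 x x1). assert (HJx := Jpos x ltac:(lra)). assert (Hxp := xpow_pos j x).
    assert (HI := HM2 x x2 _ (P1 x ltac:(lra))).
    assert (Hq : 0 < 4 * b / ((gamma + 1) * J x)) by (apply Rdiv_lt_0_compat; nra).
    apply sq_close.
    + assert (0 < sqrt (4 * b / ((gamma + 1) * J x))) by (apply sqrt_lt_R0; auto).
      apply Rdiv_lt_0_compat; apply Rmult_lt_0_compat; lra.
    + rewrite ratio_sq by lra.
      replace (v (tau x) * v (tau x) / (4 * b / ((gamma + 1) * J x)) - 1) with
        (((gamma + 1) / 4 * v (tau x) ^ 2 * J x - b) / b) by (field; repeat split; lra).
      unfold Rdiv. rewrite Rabs_mult, Rabs_inv, (Rabs_right b) by lra.
      apply (Rmult_lt_reg_r b); [lra|].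
      replace (Rabs ((gamma + 1) * / 4 * v (tau x) ^ 2 * J x - b) * / b * b) with
        (Rabs ((gamma + 1) * / 4 * v (tau x) ^ 2 * J x - b)) by (field; lra). unfold Rdiv in HI. lra.
  - intros eps He. assert (Hi : 0 < / eps) by (apply Rinv_0_lt_compat; lra).
    exists (Rmax 2 ((2 + /eps) * (2 + /eps))). intros x Hx.
    assert (x3 : 2 <= x) by (eapply Rle_trans; [|exact Hx]; apply Rmax_l).
    assert (x4 : (2 + /eps) * (2 + /eps) <= x) by (eapply Rle_trans; [|exact Hx]; apply Rmax_r).
    assert (HJx := Jpos x ltac:(lra)). assert (Hxp := xpow_pos j x).
    replace (4 * b / ((gamma + 1) * J x)) with (4 * b / (gamma + 1) / J x) by (field; lra).
    assert (HA : 0 < 4 * b / (gamma + 1)) by (apply Rdiv_lt_0_compat; lra).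
    rewrite HJJ by lra. rewrite HJJ in HJx by lra.
    destruct j as [|[|[|j']]]; [| | |lia].
    + simpl model_rate. rewrite Jt0 in * by lra. rewrite xpow0 in * by lra.
      replace (-1/2) with (- / 2) by field. rewrite Rpower_Ropp, Rpower_sqrt by lra.
      assert (Hsq := sqrt_lt_R0 x ltac:(lra)). assert (Hxx := sqrt_sqrt x ltac:(lra)).
      apply finish; auto. apply Rinv_0_lt_compat; lra.
      replace (1 * 1 / ((x - 1) * / sqrt x * / sqrt x) - 1) with ((sqrt x * sqrt x) / (x - 1) - 1) by (field; lra).
      rewrite Hxx. replace (x / (x - 1) - 1) with (/ (x - 1)) by (field; lra).
      apply inv_small; auto. nra.
    + simpl model_rate. rewrite Jt1 in * by lra. rewrite xpow1 in * by lra.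
      assert (Hsq := sqrt_lt_R0 x ltac:(lra)). assert (Hxx := sqrt_sqrt x ltac:(lra)).
      assert (Hs2 := sqrt_lt_R0 2 ltac:(lra)). assert (H22 := sqrt_sqrt 2 ltac:(lra)).
      assert (Ht : 0 < Rpower x (-3/4)) by (unfold Rpower; apply exp_pos).
      assert (Htt : Rpower x (-3/4) * Rpower x (-3/4) = / (x * sqrt x)).
      { rewrite <- Rpower_plus. replace (-3/4 + -3/4) with (- (1 + / 2)) by field.
        rewrite Rpower_Ropp, Rpower_plus, Rpower_1, Rpower_sqrt by lra. reflexivity. }
      assert (Hq2 : 2 + / eps <= sqrt x).
      { rewrite <- (sqrt_square (2 + /eps)) by lra. apply sqrt_le_1_alt. lra. }
      apply finish; auto.
      * apply Rmult_lt_0_compat; auto. apply Rinv_0_lt_compat; lra.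
      * replace (/ sqrt x * / sqrt x / ((2 * sqrt x - 2) * (/ sqrt 2 * Rpower x (-3/4)) * (/ sqrt 2 * Rpower x (-3/4))) - 1)
          with (((sqrt 2 * sqrt 2) / 2) * ((/ (x * sqrt x)) / (Rpower x (-3/4) * Rpower x (-3/4))) * (x / (sqrt x * sqrt x)) * (sqrt x / (sqrt x - 1)) - 1).
        2:{ field. repeat split; nra. }
        rewrite Htt, Hxx, H22.
        replace (2 / 2 * (/ (x * sqrt x) / / (x * sqrt x)) * (x / x) * (sqrt x / (sqrt x - 1)) - 1) with (/ (sqrt x - 1)) by (field; repeat split; nra).
        apply inv_small; auto. lra.
    + simpl model_rate. rewrite Jt2 in * by lra. rewrite xpow2 in * by lra.
      assert (HL : 0 < ln x) by exact HJx.
      assert (Hsq := sqrt_lt_R0 _ HL). assert (HLL := sqrt_sqrt (ln x) ltac:(lra)).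
      apply finish; auto.
      * apply Rmult_lt_0_compat; apply Rinv_0_lt_compat; lra.
      * replace (/ x * / x / (ln x * (/ x * / sqrt (ln x)) * (/ x * / sqrt (ln x))) - 1) with
          ((sqrt (ln x) * sqrt (ln x)) / ln x - 1) by (field; repeat split; lra).
        rewrite HLL. replace (ln x / ln x - 1) with 0 by (field; lra). rewrite Rabs_R0. lra.
Qed.
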